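(* Let $X\in L^2(\mathbb{R}^2)$ and suppose there is a nonzero $v\in L^2(\mathbb{R})$ with $\langle v,\mathcal{T}_Xv\rangle\ge0$. Then the problem $\min_{u\in L^2(\mathbb{R})}\frac12\|X-uu^*\|_{L^2(\mathbb{R}^2)}^2$ is equivalent to the problem $\max_{\|u\|_{L^2(\mathbb{R})}=1}\langle u,(\mathcal{T}_X+\mathcal{T}_X^* )u\rangle$; precisely, if $u$ is an optimal solution of the second problem, then $\big(\tfrac12\langle u,(\mathcal{T}_X+\mathcal{T}_X^* )u\rangle\big)uu^*$ is an optimal solution of the first problem (i.e., it equals $ww^*$ for a minimizer $w$ of the first problem).
   Context: For $X\in L^2(\mathbb{R}^2)$, $\mathcal{T}_X:L^2(\mathbb{R})\to L^2(\mathbb{R})$ is $\mathcal{T}_X[u](s)=\int_{\mathbb{R}}X(s,t)u(t)\,dt$, and $\mathcal{T}_X^*$ is its adjoint, $\mathcal{T}_X^*[u](t)=\int_{\mathbb{R}}X(s,t)u(s)\,ds$. For $u\in L^2(\mathbb{R})$, $uu^*$ is the function $(s,t)\mapsto u(s)u(t)$. *)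

(* Defs.v *)
From HB Require Import structures.
From mathcomp Require Import all_boot all_order all_algebra.
From mathcomp Require Import all_classical all_reals all_analysis.
Set Implicit Arguments. Unset Strict Implicit. Unset Printing Implicit Defensive.
Import Order.TTheory GRing.Theory Num.Theory.
Import numFieldNormedType.Exports.
Local Open Scope classical_set_scope.
Local Open Scope ring_scope.

Section L2defs.
Variable R : realType.
Local Notation mu := (@lebesgue_measure R).
Definition mu2 := (mu \x mu)%E.

Definition L2 (u : R -> R) : Prop :=
  measurable_fun setT u /\ mu.-integrable setT (fun x => ((u x) ^+ 2)%:E).

Definition L2_2 (X : R * R -> R) : Prop :=
  measurable_fun setT X /\ mu2.-integrable setT (fun p => ((X p) ^+ 2)%:E).

Definition ip (u v : R -> R) : R := Rintegral mu setT (fun x => u x * v x).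

Definition nrm2 (u : R -> R) : R := ip u u.

Definition TX (X : R * R -> R) (u : R -> R) : R -> R :=
  fun s => Rintegral mu setT (fun t => X (s, t) * u t).

Definition TXadj (X : R * R -> R) (u : R -> R) : R -> R :=
  fun t => Rintegral mu setT (fun s => X (s, t) * u s).

Definition outer (u : R -> R) : R * R -> R := fun p => u p.1 * u p.2.

Definition obj1 (X : R * R -> R) (u : R -> R) : R :=
  2^-1 * Rintegral mu2 setT (fun p => (X p - outer u p) ^+ 2).

Definition obj2 (X : R * R -> R) (u : R -> R) : R :=
  ip u (fun s => TX X u s + TXadj X u s).
End L2defs.

(* Main.v *)
Require Import Defs.
From HB Require Import structures.
From mathcomp Require Import all_boot all_order all_algebra.
From mathcomp Require Import all_classical all_reals all_analysis.
From mathcomp Require Import lra ring measurable_realfun.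
Import Order.TTheory GRing.Theory Num.Theory.
Local Open Scope classical_set_scope.
Local Open Scope ring_scope.
Lemma fineBpos (R : realType) (r : R) (a b : \bar R) : 0 <= r -> (0 <= a)%E -> (0 <= b)%E ->
  fine (r%:E * a - r%:E * b)%E = r * fine (a - b)%E.
Proof.
move=> r0 a0 b0.
have [->|rp] := eqVneq r 0; first by rewrite !mul0e mul0r /= subr0.
have rgt : 0 < r by rewrite lt_def rp r0.
case: a a0 => [a| |] //= a0; case: b b0 => [b| |] //= b0.
- by rewrite /= mulrBr.
- by rewrite mulry gtr0_sg // mul1e /= mulr0.
- by rewrite mulry gtr0_sg // mul1e /= mulr0.
- by rewrite mulry gtr0_sg // mul1e /= mulr0.
Qed.

Lemma fineBswap (R : realType) (a b : \bar R) : (0 <= a)%E -> (0 <= b)%E ->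
  fine (b - a)%E = - fine (a - b)%E.
Proof.
case: a => [a| |] //=; case: b => [b| |] //= _ _; rewrite ?opprB ?oppr0 //.
Qed.

Lemma fine_integralZl (R : realType) d (T : measurableType d)
  (m : {measure set T -> \bar R}) (g : T -> R) (c : R) :
  measurable_fun setT g ->
  fine (\int[m]_x ((c * g x)%:E)) = c * fine (\int[m]_x (g x)%:E).
Proof.
move=> mg.
have mge : measurable_fun setT (EFin \o g) by apply/measurable_EFinP.
have -> : (fun x => (c * g x)%:E) = (fun x => (c%:E * (g x)%:E)%E).
  by apply/funext => x; rewrite EFinM.
rewrite integralE [in RHS]integralE.
have [c0|c0] := leP 0 c.
- rewrite ge0_funeposM // ge0_funenegM //.
  rewrite (ge0_integralZl_EFin _ _ _ (measurable_funepos mge)) //.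
  rewrite (ge0_integralZl_EFin _ _ _ (measurable_funeneg mge)) //.
  by rewrite fineBpos //; apply: integral_ge0.
- have c0' : 0 <= - c by rewrite oppr_ge0 ltW.
  rewrite le0_funeposM ?ltW // le0_funenegM ?ltW //.
  rewrite -EFinN.
  rewrite (ge0_integralZl_EFin _ _ _ (measurable_funeneg mge)) //.
  rewrite (ge0_integralZl_EFin _ _ _ (measurable_funepos mge)) //.
  rewrite fineBpos //; try by apply: integral_ge0.
  by rewrite fineBswap ?mulrNN //; apply: integral_ge0.
Qed.
Section Main.
Variable R : realType.
Local Notation mu := (@lebesgue_measure R).

Lemma absM_le (a b : R) : `|a * b| <= a ^+ 2 + b ^+ 2.
Proof.
have [h|h] := lerP 0 (a * b); [rewrite ger0_norm // | rewrite ltr0_norm //]; nra.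
Qed.

Lemma nrm2_ge0 (u : R -> R) : 0 <= nrm2 u.
Proof. by apply: Rintegral_ge0 => x _; rewrite -expr2 sqr_ge0. Qed.

Lemma L2_fin (u : R -> R) : L2 u -> (\int[mu]_x ((u x ^+ 2)%:E))%E = (nrm2 u)%:E.
Proof.
move=> [_ h]; rewrite /nrm2 /ip /Rintegral.
under [in RHS]eq_integral => x _ do rewrite -expr2.
by rewrite fineK //; exact: integrable_fin_num.
Qed.

Lemma mouter (u : R -> R) : measurable_fun setT u -> measurable_fun setT (outer u).
Proof.
move=> mu'; apply: measurable_funM.
- exact: (measurableT_comp mu' measurable_fst).
- exact: (measurableT_comp mu' measurable_snd).
Qed.

Lemma int_outer2 (u : R -> R) : L2 u ->
  (@mu2 R).-integrable setT (fun p => (outer u p ^+ 2)%:E) /\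
  (\int[@mu2 R]_p ((outer u p ^+ 2)%:E))%E = ((nrm2 u ^+ 2)%:E).
Proof.
move=> hu; have [mu' iu] := hu.
have mo : measurable_fun setT (fun p => (outer u p ^+ 2)%:E).
  by apply/measurable_EFinP; apply: measurable_funX; exact: mouter.
have E : (\int[@mu2 R]_p ((outer u p ^+ 2)%:E))%E = ((nrm2 u ^+ 2)%:E).
  rewrite /mu2 (@fubini_tonelli1 _ _ _ _ _ mu mu _ mo); last by move=> p; rewrite lee_fin sqr_ge0.
  transitivity (\int[mu]_x ((u x ^+ 2)%:E * (nrm2 u)%:E))%E.
    apply: eq_integral => x _; rewrite /fubini_F.
    transitivity (\int[mu]_y ((u x ^+ 2)%:E * (u y ^+ 2)%:E))%E.
      by apply: eq_integral => y _; rewrite /outer /= exprMn EFinM.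
    rewrite ge0_integralZl_EFin //; first by rewrite L2_fin.
    - by move=> y _; rewrite lee_fin sqr_ge0.
    - by apply/measurable_EFinP; apply: measurable_funX.
    - by rewrite sqr_ge0.
  by rewrite integralZr // L2_fin // -EFinM expr2.
split => //; apply/integrableP; split => //.
under eq_integral => p _ do rewrite gee0_abs ?lee_fin ?sqr_ge0 //.
by rewrite E ltry.
Qed.

Variable X : R * R -> R.
Hypothesis hX : L2_2 X.

Lemma int_F (u : R -> R) : L2 u ->
  (@mu2 R).-integrable setT (fun p => (X p * outer u p)%:E).
Proof.
move=> hu.
have ig := integrableD measurableT hX.2 (int_outer2 u hu).1.
apply: (le_integrable measurableT _ _ ig).
- apply/measurable_EFinP; apply: measurable_funM; [exact: hX.1 | exact: (mouter u hu.1)].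
- move=> p _ /=; rewrite lee_fin; apply: le_trans (absM_le _ _) _; exact: ler_norm.
Qed.

Definition B (u : R -> R) := Rintegral (@mu2 R) setT (fun p => X p * outer u p).

Lemma fine_le (e : \bar R) : (`|(fine e)%:E| <= `|e|)%E.
Proof. by case: e => [r| |] /=; rewrite ?lexx ?leey. Qed.

Lemma ipTX (u : R -> R) : L2 u ->
  mu.-integrable setT (EFin \o (fun s => u s * TX X u s)) /\ ip u (TX X u) = B u.
Proof.
move=> hu; have iF := int_F u hu.
set f := (fun p => (X p * outer u p)%:E) in iF *.
have mX : measurable_fun setT X := hX.1.
have Fe s : u s * TX X u s = fine (fubini_F mu f s).
  have -> : fubini_F mu f s = (\int[mu]_t ((u s * (X (s, t) * u t))%:E))%E.
    by apply: eq_integral => t _; rewrite /f /outer /= mulrCA.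
  rewrite fine_integralZl //; apply: measurable_funM; last exact: hu.1.
  by apply: (measurableT_comp mX).
have funeq : (fun s => u s * TX X u s) = (fun s => fine (fubini_F mu f s)).
  exact: funext Fe.
have mG : measurable_fun setT (fun s => fine (fubini_F mu f s)).
  exact: (measurableT_comp (fine_measurable measurableT) (measurable_fubini_F iF)).
have iG : mu.-integrable setT (EFin \o (fun s => u s * TX X u s)).
  rewrite funeq; apply: (le_integrable measurableT _ _ (integrable_fubini_F iF)).
  - by apply/measurable_EFinP.
  - by move=> s _; exact: fine_le.
split => //.
rewrite /ip /B /Rintegral.
under eq_integral => s _ do rewrite Fe.
congr fine; rewrite /mu2 -(integral12_prod_meas1 iF).
apply: ae_eq_integral => //.
- by apply/measurable_EFinP.
- exact: measurable_fubini_F iF.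
- have := integrable_ae measurableT (integrable_fubini_F iF).
  by apply: filterS => s h _; rewrite fineK //; exact: h.
Qed.

Lemma int_G (f : R * R -> \bar R) : (@mu2 R).-integrable setT f ->
  mu.-integrable setT (fubini_G mu f).
Proof.
move=> iF; apply/integrableP; split; first exact: measurable_fubini_G iF.
have mf : measurable_fun setT f := measurable_int _ iF.
have maf : measurable_fun setT (abse \o f) by apply: measurableT_comp.
move/integrableP: (iF) => [_ iab].
have h0 : forall p, (0 <= (abse \o f) p)%E by move=> p; exact: abse_ge0.
rewrite /mu2 (@fubini_tonelli2 _ _ _ _ _ mu mu _ maf h0) in iab.
apply: le_lt_trans iab; apply: ge0_le_integral => //.
- by apply: measurableT_comp => //; exact: measurable_fubini_G iF.
- exact: (@measurable_fun_fubini_tonelli_G _ _ _ _ _ mu _ maf h0).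
- move=> t _; rewrite /fubini_G; apply: le_abse_integral => //.
  by apply: (measurableT_comp mf).
Qed.

Lemma ipTXadj (u : R -> R) : L2 u ->
  mu.-integrable setT (EFin \o (fun s => u s * TXadj X u s)) /\ ip u (TXadj X u) = B u.
Proof.
move=> hu; have iF := int_F u hu.
set f := (fun p => (X p * outer u p)%:E) in iF *.
have mX : measurable_fun setT X := hX.1.
have Fe t : u t * TXadj X u t = fine (fubini_G mu f t).
  have -> : fubini_G mu f t = (\int[mu]_s ((u t * (X (s, t) * u s))%:E))%E.
    by apply: eq_integral => s _; rewrite /f /outer /=; congr EFin; ring.
  rewrite fine_integralZl //; apply: measurable_funM; last exact: hu.1.
  by apply: (measurableT_comp mX).
have funeq : (fun s => u s * TXadj X u s) = (fun s => fine (fubini_G mu f s)).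
  exact: funext Fe.
have mG : measurable_fun setT (fun s => fine (fubini_G mu f s)).
  exact: (measurableT_comp (fine_measurable measurableT) (measurable_fubini_G iF)).
have iG : mu.-integrable setT (EFin \o (fun s => u s * TXadj X u s)).
  rewrite funeq; have iGG := int_G f iF; apply: (le_integrable measurableT _ _ iGG).
  - by apply/measurable_EFinP.
  - by move=> s _; exact: fine_le.
split => //.
rewrite /ip /B /Rintegral.
under eq_integral => s _ do rewrite Fe.
congr fine; rewrite /mu2 -(integral21_prod_meas1 iF).
apply: ae_eq_integral => //.
- by apply/measurable_EFinP.
- exact: measurable_fubini_G iF.
- have := integrable_ae measurableT (int_G f iF).
  by apply: filterS => s h _; rewrite fineK //; exact: h.
Qed.

Lemma obj2E (u : R -> R) : L2 u -> obj2 X u = 2 * B u.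
Proof.
move=> hu; have [i1 e1] := ipTX u hu; have [i2 e2] := ipTXadj u hu.
rewrite /obj2 /ip.
under eq_Rintegral => s _ do rewrite mulrDr.
rewrite RintegralD //.
change (ip u (TX X u) + ip u (TXadj X u) = 2 * B u).
by rewrite e1 e2; ring.
Qed.

Lemma obj1E (u : R -> R) : L2 u -> obj1 X u =
  2^-1 * Rintegral (@mu2 R) setT (fun p => X p ^+ 2) - B u + 2^-1 * nrm2 u ^+ 2.
Proof.
move=> hu; rewrite /obj1.
have -> : (fun p => (X p - outer u p) ^+ 2) =
   (fun p => (X p ^+ 2 - 2 * (X p * outer u p)) + outer u p ^+ 2).
  by apply/funext => p; ring.
have iX2 : (@mu2 R).-integrable setT (EFin \o (fun p => X p ^+ 2)) := hX.2.
have iF2 : (@mu2 R).-integrable setT (EFin \o (fun p => 2 * (X p * outer u p))).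
  apply: (eq_integrable measurableT _ _ _ (integrableZl measurableT 2 (int_F u hu))).
  by move=> p _; rewrite /= EFinM.
have io2 : (@mu2 R).-integrable setT (EFin \o (fun p => outer u p ^+ 2)).
  exact: (int_outer2 u hu).1.
have iB : (@mu2 R).-integrable setT
    (EFin \o (fun p => X p ^+ 2 - 2 * (X p * outer u p))).
  apply: (eq_integrable measurableT _ _ _ (integrableB measurableT iX2 iF2)).
  by move=> p _; rewrite /= EFinB.
rewrite RintegralD // RintegralB // RintegralZl //; last exact: int_F.
have -> : Rintegral (@mu2 R) setT (fun p => outer u p ^+ 2) = nrm2 u ^+ 2.
  by rewrite /Rintegral (int_outer2 u hu).2.
by rewrite /B; field.
Qed.

Lemma L2Z (c : R) (u : R -> R) : L2 u -> L2 (fun x => c * u x).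
Proof.
move=> hu; split.
  by apply: measurable_funM; [exact: measurable_cst | exact: hu.1].
apply: (eq_integrable measurableT _ _ _ (integrableZl measurableT (c ^+ 2) hu.2)).
by move=> x _; rewrite exprMn EFinM.
Qed.

Lemma L2_int (u : R -> R) : L2 u -> mu.-integrable setT (EFin \o (fun x => u x * u x)).
Proof.
move=> hu; apply: (eq_integrable measurableT _ _ _ hu.2).
by move=> x _; rewrite /= expr2.
Qed.

Lemma nrm2Z (c : R) (u : R -> R) : L2 u -> nrm2 (fun x => c * u x) = c ^+ 2 * nrm2 u.
Proof.
move=> hu; rewrite /nrm2 /ip.
transitivity (Rintegral mu setT (fun x => c ^+ 2 * (u x * u x))).
  by apply: eq_Rintegral => x _ /=; ring.
by rewrite RintegralZl //; exact: L2_int.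
Qed.

Lemma BZ (c : R) (u : R -> R) : L2 u -> B (fun x => c * u x) = c ^+ 2 * B u.
Proof.
move=> hu; rewrite /B.
transitivity (Rintegral (@mu2 R) setT (fun p => c ^+ 2 * (X p * outer u p))).
  by apply: eq_Rintegral => p _; rewrite /outer /=; ring.
by rewrite RintegralZl //; exact: int_F.
Qed.

Lemma nrm2_eq0 (u : R -> R) : L2 u -> nrm2 u = 0 -> {ae mu, forall x, u x = 0}.
Proof.
move=> hu h0.
have mf : measurable_fun setT (fun x => (u x ^+ 2)%:E).
  by apply/measurable_EFinP; apply: measurable_funX; exact: hu.1.
have H : (\int[mu]_x `|(u x ^+ 2)%:E|)%E = 0%E.
  under eq_integral => x _ do rewrite gee0_abs ?lee_fin ?sqr_ge0 //.
  by rewrite L2_fin // h0.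
have := (ae_eq_integral_abs mu measurableT mf).1 H.
apply: filterS => x /(_ I) /= [/eqP]; rewrite sqrf_eq0 => /eqP //.
Qed.

Lemma B_ae0 (u : R -> R) : L2 u -> {ae mu, forall x, u x = 0} -> B u = 0.
Proof.
move=> hu h; have [iG <-] := ipTX u hu.
rewrite /ip /Rintegral (ae_eq_integral (cst 0%E)) //.
- by rewrite integral0.
- exact: (measurable_int _ iG).
- move: h; rewrite /ae_eq; apply: (filterS (Filter := ae_filter_ringOfSetsType mu)) => x ux _; by rewrite /= ux mul0r.
Qed.

End Main.

Theorem mainTheorem20 (R : realType) (X : R * R -> R) :
  L2_2 X ->
  (exists v : R -> R, L2 v /\ ~ {ae (@lebesgue_measure R), forall x, v x = 0}
                      /\ 0 <= ip v (TX X v)) ->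
  forall u : R -> R, L2 u -> nrm2 u = 1 ->
  (forall u' : R -> R, L2 u' -> nrm2 u' = 1 -> obj2 X u' <= obj2 X u) ->
  exists w : R -> R,
    L2 w /\
    (forall y : R -> R, L2 y -> obj1 X w <= obj1 X y) /\
    {ae (@mu2 R), forall p, (2^-1 * obj2 X u) * outer u p = outer w p}.
Proof.
move=> hX [v [hv [hv0 hvpos]]] u hu hu1 hmax.
have o2u : obj2 X u = 2 * @B R X u := obj2E _ _ hX u hu.
have key : forall y, L2 y -> nrm2 y = 1 -> @B R X y <= @B R X u.
  move=> y hy hy1; have := hmax y hy hy1; rewrite (obj2E _ _ hX y hy) o2u => h.
  lra.
have scal : forall y, L2 y -> 0 < nrm2 y -> @B R X y <= nrm2 y * @B R X u.
  move=> y hy hn.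
  pose k := (Num.sqrt (nrm2 y))^-1.
  have hk : L2 (fun x => k * y x) := L2Z _ k y hy.
  have k2 : k ^+ 2 = (nrm2 y)^-1 by rewrite /k exprVn sqr_sqrtr ?ltW.
  have h1 : nrm2 (fun x => k * y x) = 1.
    by rewrite nrm2Z // k2 mulVf // gt_eqF.
  have := key _ hk h1; rewrite (BZ _ _ hX) // k2 => h.
  have -> : @B R X y = nrm2 y * ((nrm2 y)^-1 * @B R X y).
    by rewrite mulrA mulfV ?gt_eqF // mul1r.
  by rewrite ler_pM2l.
have c0 : 0 <= @B R X u.
  have hn0 : 0 < nrm2 v.
    rewrite lt_def nrm2_ge0 andbT; apply/eqP => h; apply: hv0.
    exact: nrm2_eq0 _ v hv h.
  have Bv : @B R X v = ip v (TX X v) := esym (ipTX _ _ hX v hv).2.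
  have h := scal v hv hn0.
  rewrite -(pmulr_rge0 _ hn0); apply: le_trans h; by rewrite Bv.
exists (fun x => Num.sqrt (@B R X u) * u x).
have hw := L2Z _ (Num.sqrt (@B R X u)) u hu.
have sq : Num.sqrt (@B R X u) ^+ 2 = @B R X u := sqr_sqrtr c0.
split => //; split.
- move=> y hy; rewrite !(obj1E _ _ hX) // (BZ _ _ hX) // nrm2Z // sq hu1 mulr1.
  have [n0|n0] := eqVneq (nrm2 y) 0.
  + rewrite n0 (B_ae0 _ _ hX y hy (nrm2_eq0 _ y hy n0)).
    have := sqr_ge0 (@B R X u); nra.
  + have hn : 0 < nrm2 y by rewrite lt_def n0 nrm2_ge0.
    have := scal y hy hn; have := sqr_ge0 (nrm2 y - @B R X u); nra.
- by apply: aeW => p; rewrite o2u /outer /= -{1}sq; field.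
Qed.
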